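(* Let $n\ge 1$. Let $\bar\pi=\bar\pi(0,d_1,\dots,d_t)$ and $\bar\pi'=\bar\pi(0,d'_1,\dots,d'_u)$ be normalized pure diagrams with $0\le t,u\le n$, and suppose $\bar\pi<\bar\pi'$ in the partial order. Then $H(\bar\pi',t)-H(\bar\pi,t)$ is a nonzero power series all of whose coefficients are nonnegative; i.e. the Hilbert series is strictly increasing on the partially ordered set of normalized pure diagrams generated in degree zero.
   Context: For integers $d_0<\dots<d_t$, $0\le t\le n$, the pure diagram $\pi(d_0,\dots,d_t)=(\pi_{i,j})_{0\le i\le n,\,j\in\mathbb Z}$ has entry $(-1)^i\prod_{0\le j\le t,\,j\ne i}\frac{1}{d_j-d_i}$ at position $(i,d_i)$, $i=0,\dots,t$, and $0$ elsewhere. When $d_0=0$, the normalized pure diagram is $\bar\pi(0,d_1,\dots,d_t)=d_1d_2\cdots d_t\,\pi(0,d_1,\dots,d_t)$. Partial order: $\pi(d_0,\dots,d_t)\le\pi(d'_0,\dots,d'_u)$ iff $t\ge u$ and $d_i\le d'_i$ for $i=0,\dots,u$ (same for the normalized diagrams). For an array $\beta=(\beta_{i,j})$, its Hilbert series is $H(\beta,t)=\frac{1}{(1-t)^n}\sum_{i=0}^n\sum_j(-1)^i\beta_{i,j}t^j$, expanded as a power series in $t$. *)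

(* Defs.v *)
From HB Require Import structures.
From mathcomp Require Import all_boot all_order all_algebra.
Set Implicit Arguments. Unset Strict Implicit. Unset Printing Implicit Defensive.
Import Order.TTheory GRing.Theory Num.Theory.
Local Open Scope ring_scope.

(* An array beta = (beta_{i,j}) with 0 <= i <= n, j in Z, rational entries,
   is represented as a function  nat -> int -> rat  (rows i > n are ignored). *)
Definition array := nat -> int -> rat.

Definition pure_diagram (d : seq int) : array :=
  fun i j =>
    if (i < size d)%N && (j == nth 0 d i) then
      (-1) ^+ i * \prod_(k < size d | (k : nat) != i)
                    ((nth 0 d k - nth 0 d i)%:~R)^-1
    else 0.

Definition norm_pure_diagram (d : seq int) : array :=
  fun i j => (\prod_(k < size d | (0 < (k : nat))%N) (nth 0 d k)%:~R)
             * pure_diagram d i j.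

Definition valid_degrees (n : nat) (d : seq int) : bool :=
  [&& (0 < size d)%N, (size d <= n.+1)%N & sorted <%R d].

Definition pd_le (d d' : seq int) : bool :=
  (size d' <= size d)%N &&
  [forall i : 'I_(size d'), nth 0 d i <= nth 0 d' i].

Definition pd_lt (d d' : seq int) : bool := pd_le d d' && (d != d').

(* Multiplication of a power series (coefficient sequence) by 1/(1-t). *)
Definition psum (f : nat -> rat) : nat -> rat :=
  fun k => \sum_(m < k.+1) f m.

Definition hilb_num (n : nat) (b : array) : nat -> rat :=
  fun j => \sum_(i < n.+1) (-1) ^+ i * b i (Posz j).

(* k-th coefficient of H(beta,t) = hilb_num / (1-t)^n as a power series in t. *)
Definition hilb_coef (n : nat) (b : array) : nat -> rat :=
  iter n psum (hilb_num n b).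

(* Main.v *)
Require Import Defs.
From HB Require Import structures.
From mathcomp Require Import all_boot all_order all_algebra.
From mathcomp Require Import ring lra.
Import Order.TTheory GRing.Theory Num.Theory.
Local Open Scope ring_scope.

Definition cc (a : seq int) (y : int) : rat :=
  \prod_(z <- a | z != y) ((z - y)%:~R)^-1.
Definition DD (a : seq int) (f : int -> rat) : rat :=
  \sum_(y <- a) cc a y * f y.

Lemma cc_perm a b y : perm_eq a b -> cc a y = cc b y.
Proof. by move=> h; rewrite /cc (perm_big b). Qed.

Lemma DD_perm a b f : perm_eq a b -> DD a f = DD b f.
Proof.
move=> h; rewrite /DD (perm_big b h); apply: eq_bigr => y _.
by rewrite (@cc_perm a b y h).
Qed.

Lemma DD_ext a f g : {in a, f =1 g} -> DD a f = DD a g.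
Proof. by move=> h; rewrite /DD big_seq [RHS]big_seq; apply: eq_bigr => y /h ->. Qed.

Lemma DD_lin a (al : rat) f g : DD a (fun y => al * f y + g y) = al * DD a f + DD a g.
Proof.
rewrite /DD mulr_sumr -big_split /=; apply: eq_bigr => y _; ring.
Qed.

Lemma DD_scale a (al : rat) f : DD a (fun y => al * f y) = al * DD a f.
Proof. by rewrite /DD mulr_sumr; apply: eq_bigr => y _; ring. Qed.

Lemma intr_neq0 (x y : int) : x != y -> ((x - y)%:~R : rat) != 0.
Proof. by move=> h; rewrite intr_eq0 subr_eq0. Qed.

Lemma DD_TP p q A f : p != q -> p \notin A -> q \notin A ->
  DD [:: p, q & A] f = (DD (p :: A) f - DD (q :: A) f) / (q - p)%:~R.
Proof.
move=> pq pA qA; rewrite /DD !big_cons.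
have cp : cc [:: p, q & A] p = (q - p)%:~R^-1 * cc (p :: A) p.
  have qp : q != p by rewrite eq_sym.
  by rewrite /cc !big_cons eqxx qp /=.
have cq : cc [:: p, q & A] q = - ((q - p)%:~R^-1 * cc (q :: A) q).
  rewrite /cc !big_cons eqxx /= pq /=.
  rewrite -mulNr; congr (_ * _); by rewrite -opprB mulrNz invrN.
have cy : forall y, y \in A -> cc [:: p, q & A] y =
   ((cc (p :: A) y - cc (q :: A) y) / (q - p)%:~R).
  move=> y yA.
  have py : p != y by apply: contraNneq pA => ->.
  have qy : q != y by apply: contraNneq qA => ->.
  rewrite /cc !big_cons py qy /=.
  have h1 := intr_neq0 _ _ py; have h2 := intr_neq0 _ _ qy; 
  rewrite !rmorphB /=. rewrite !rmorphB /= in h1 h2.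
  have h3' : (q%:~R - p%:~R : rat) != 0 by rewrite -rmorphB /= intr_eq0 subr_eq0 eq_sym.
  move: h1 h2 h3'; set P : rat := p%:~R; set Q : rat := q%:~R; set Y : rat := y%:~R; set X := \prod_(_ <- _ | _) _.
  move=> h1 h2 h3; field. by apply/and3P; split.
rewrite cp cq.
rewrite (big_seq _ _ A) [X in _ = (_ + X - _) / _]big_seq [X in _ = (_ - (_ + X)) / _]big_seq.
rewrite (eq_bigr (fun y => (cc (p :: A) y - cc (q :: A) y) / (q - p)%:~R * f y)); last first.
  by move=> y yA; rewrite cy.
have h3' : ((q - p)%:~R : rat) != 0 by rewrite intr_eq0 subr_eq0 eq_sym.
set S := \sum_(i <- A | i \in A) _.
have -> : S = ((\sum_(i <- A | i \in A) cc (p :: A) i * f i) - \sum_(i <- A | i \in A) cc (q :: A) i * f i) / (q - p)%:~R.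
  rewrite /S -sumrB mulr_suml; apply: eq_bigr => y _; ring.
move: (cc (p :: A) p) (cc (q :: A) q) (f p) (f q) (\sum_(i <- A | i \in A) cc (p :: A) i * f i) (\sum_(i <- A | i \in A) cc (q :: A) i * f i) => a b c e g h.
field. by rewrite -rmorphB /= intr_eq0 subr_eq0 eq_sym.
Qed.

Lemma DD_rem p A f : p \notin A ->
  DD (p :: A) (fun y => (y%:~R - p%:~R) * f y) = - DD A f.
Proof.
move=> pA; rewrite /DD big_cons subrr mul0r mulr0 add0r.
rewrite -sumrN big_seq [RHS]big_seq; apply: eq_bigr => y yA.
have py : p != y by apply: contraNneq pA => ->.
rewrite /cc big_cons py.
have h : (y%:~R - p%:~R : rat) != 0 by rewrite -rmorphB /= intr_eq0 subr_eq0 eq_sym.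
have h2 : ((p - y)%:~R : rat) = - (y%:~R - p%:~R) by rewrite rmorphB /= opprB.
rewrite h2; move: h (\prod_(_ <- _ | _) _) (f y) => h a b; field; done.
Qed.

Definition psi (m k : nat) (y : int) : rat :=
  iter m psum (fun j : nat => ((Posz j == y)%:R : rat)) k.

Lemma psi0 k y : psi 0 k y = ((Posz k == y)%:R).
Proof. by []. Qed.

Lemma psiS m k y : psi m.+1 k y = \sum_(j < k.+1) psi m j y.
Proof. by []. Qed.

Lemma psiSS m k y : psi m.+1 k.+1 y = psi m.+1 k y + psi m k.+1 y.
Proof. by rewrite /psi /= {1}/psum big_ord_recr. Qed.

Lemma psi_closed m k (y : nat) :
  psi m.+1 k (Posz y) = if (y <= k)%N then ('C(k - y + m, m))%:R else 0.
Proof.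
elim: m k => [|m IH] k.
  rewrite psiS /psi /=.
  elim: k => [|k IHk]; first by rewrite big_ord1 /=; case: y.
  rewrite big_ord_recr /= IHk.
  case: (ltngtP y k.+1) => h.
  - rewrite ltnS in h; rewrite h !bin0.
    by have -> : (Posz k.+1 == Posz y) = false by apply/negbTE; rewrite eqz_nat neq_ltn ltnS h orbT.
  - by rewrite leqNgt (ltnW h) /= eqz_nat (ltn_eqF h) addr0.
  - by rewrite h ltnn eqxx add0r bin0.
elim: k => [|k IHk].
  rewrite psiS big_ord1 IH; case: leqP => // h.
  by move: h; rewrite leqn0 => /eqP ->; rewrite !binn.
rewrite psiSS IHk IH.
case: (ltngtP y k.+1) => h.
- rewrite ltnS in h; rewrite h -natrD.
  by rewrite subSn // !addSn !addnS binS.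
- by rewrite leqNgt (ltnW h) /= addr0.
- by rewrite h ltnn subnn !add0n !binn add0r.
Qed.

Lemma psi_rec m k (y : nat) :
  (m.+1)%:R * psi m.+2 k (Posz y) =
   ((k%:R + (m.+1)%:R - (Posz y)%:~R) : rat) * psi m.+1 k (Posz y).
Proof.
rewrite !psi_closed; case: leqP => h; last by rewrite !mulr0.
rewrite -natrM.
have -> : (k%:R + (m.+1)%:R - (Posz y)%:~R : rat) = (k - y + m.+1)%:R.
  by rewrite natrD natrB // -!pmulrn; ring.
rewrite -natrM; congr (_%:R).
have := mul_bin_diag (k - y + m.+1) m. rewrite addnS /= => ->.
by rewrite mulnC.
Qed.
Lemma DD_comb a (al : rat) f h :
  DD a (fun y => al * f y - h y) = al * DD a f - DD a h.
Proof.
rewrite (DD_lin a al f (fun y => - h y)); congr (_ + _).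
rewrite -mulN1r -DD_scale; apply: DD_ext => y _; ring.
Qed.

Lemma DD_single p f : DD [:: p] f = f p.
Proof. by rewrite /DD big_cons big_nil /cc big_cons eqxx big_nil mul1r addr0. Qed.

Lemma DD_pair p q f : p != q ->
  DD [:: p; q] f = (f p - f q) / (q - p)%:~R.
Proof.
move=> pq; have qp : q != p by rewrite eq_sym.
rewrite /DD !big_cons big_nil /cc !big_cons !big_nil eqxx pq qp /= !mulr1 addr0.
have h1 : ((q - p)%:~R : rat) != 0 by rewrite intr_eq0 subr_eq0.
have -> : ((p - q)%:~R : rat) = - (q - p)%:~R by rewrite -mulrNz opprB.
rewrite eqxx mulr1 invrN mulNr mulrBl [f p / _]mulrC [f q / _]mulrC /=; done.
Qed.

Lemma psi1 k (y : int) : 0 <= y -> psi 1 k y = ((y <= Posz k)%R)%:R.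
Proof.
case: y => // y _; rewrite psi_closed lez_nat; case: leqP => // _.
by rewrite bin0.
Qed.

Definition Pp (a : seq int) m k := DD a (psi m k).

Definition LLprop (m : nat) (a : seq int) :=
  [/\ forall k, 0 <= DD a (psi m k),
      forall k : nat, k%:Z < head 0 a -> DD a (psi m k) = 0,
      forall k : nat, last 0 a - m%:Z < k%:Z -> DD a (psi m k) = 0 &
      forall k : nat, k%:Z = head 0 a -> 0 < DD a (psi m k)].

Lemma LL0 p : 0 <= p -> LLprop 0 [:: p].
Proof.
move=> p0; split => k /=; rewrite DD_single psi0 //.
- by move=> h; case: eqP => // e; move: h; rewrite e ltxx.
- by rewrite subr0 => h; case: eqP => // e; move: h; rewrite e ltxx.
- by move=> ->; rewrite eqxx ltr01.
Qed.

Lemma LL1 p q : 0 <= p -> p < q -> LLprop 1 [:: p; q].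
Proof.
move=> p0 pq; have q0 : 0 <= q by apply: (le_trans p0); apply: ltW.
have npq : p != q by rewrite lt_eqF.
have hD : (0 : rat) < (q - p)%:~R by rewrite ltr0z subr_gt0.
split => k /=; rewrite DD_pair // !psi1 //.
- apply: divr_ge0; last by apply: ltW.
  case: (leP q k) => h; last by rewrite subr0 ler0n.
  by rewrite (le_trans (ltW pq) h) subrr.
- move=> h; have h1 : (p <= k) = false by apply/negbTE; rewrite -ltNge.
  have h2 : (q <= k) = false by apply/negbTE; rewrite -ltNge; apply: (lt_trans h).
  by rewrite h1 h2 subrr mul0r.
- move=> h; have h2 : q <= k by move: h; rewrite ltrBlDr; rewrite -ltzD1 addrC.
  by rewrite h2 (le_trans (ltW pq) h2) subrr mul0r.
- move=> e; rewrite e lexx; have -> : (q <= p) = false by apply/negbTE; rewrite -ltNge.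
  by rewrite subr0 mul1r invr_gt0.
Qed.
From mathcomp Require Import zify.

Lemma le_ir (x y : int) : x <= y -> (x%:~R : rat) <= y%:~R.
Proof. by rewrite ler_int. Qed.
Lemma lt_ir (x y : int) : x < y -> (x%:~R : rat) < y%:~R.
Proof. by rewrite ltr_int. Qed.

Lemma notin_lt (p : int) R : all (fun x => p < x) R -> p \notin R.
Proof. by move/allP=> h; apply/negP => /h; rewrite ltxx. Qed.
Lemma notin_gt (p : int) R : all (fun x => x < p) R -> p \notin R.
Proof. by move/allP=> h; apply/negP => /h; rewrite ltxx. Qed.

Lemma iA (k q : int) (m : nat) : k <= q - (m.+1)%:Z -> k + (m.+1)%:Z <= q.
Proof. lia. Qed.
Lemma iB (x q k : int) (m : nat) : x < q -> q - (m.+2)%:Z < k -> x - (m.+1)%:Z < k.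
Proof. lia. Qed.
Lemma iC (q k : int) (m : nat) : q - (m.+2)%:Z < k -> k <= q - (m.+1)%:Z -> q = k + (m.+1)%:Z.
Proof. lia. Qed.

Lemma LLS m a : (forall b, size b = m.+2 -> sorted <%R b -> all (fun x => 0 <= x) b -> LLprop m.+1 b) ->
  size a = m.+3 -> sorted <%R a -> all (fun x => 0 <= x) a -> LLprop m.+2 a.
Proof.
case: a => [|p [|r R']] // IH [sz] hs hnn.
set R := r :: R'. set L := p :: belast r R'. set q := last r R'.
have eqa : p :: R = rcons L q by rewrite /R /L /q lastI.
move: (hs); rewrite lt_sorted_pairwise pairwise_cons => /andP [pR pwR].
have hs2 := hs; rewrite lt_sorted_pairwise eqa pairwise_rcons in hs2; case/andP: hs2 => Lq pwL.
move: (hnn) => /= /andP [p0 nnR].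
have hn2 := hnn; rewrite eqa all_rcons in hn2; case/andP: hn2 => _ nnL.
have szR : size R = m.+2 by rewrite /= sz.
have szL : size L = m.+2 by rewrite /= size_belast sz.
have [IR1 IR2 IR3 IR4] := IH R szR (pairwise_sorted pwR) nnR.
have [IL1 IL2 IL3 IL4] := IH L szL (pairwise_sorted pwL) nnL.
have hL : head 0 L = p by [].
have hR : head 0 R = r by [].
have lR : last 0 R = q by [].
have pr : p < r by move: pR => /= /andP [].
have lLq : last 0 L < q by apply: (allP Lq); rewrite /L /= mem_last.
have pq : p < q by apply: (allP pR); rewrite /R /q mem_last.
have pnR : p \notin R by apply: notin_lt.
have qnL : q \notin L by apply: notin_gt.
have permq : perm_eq (p :: R) (q :: L) by rewrite eqa perm_rcons.
have recur : forall k : nat,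
   (q%:~R - p%:~R) * ((m.+1)%:R * DD (p :: R) (psi m.+2 k)) =
   ((Posz k)%:~R + (m.+1)%:R - p%:~R) * DD L (psi m.+1 k) +
   (q%:~R - (Posz k)%:~R - (m.+1)%:R) * DD R (psi m.+1 k).
  move=> k; set g := psi m.+1 k.
  set cst : rat := (Posz k)%:~R + (m.+1)%:R.
  have E0 : (m.+1)%:R * DD (p :: R) (psi m.+2 k) =
            DD (p :: R) (fun y => (cst - y%:~R) * g y).
    rewrite -DD_scale; apply: DD_ext => y yin.
    have y0 : 0 <= y by apply: (allP hnn).
    by case: y y0 yin => // y _ _; rewrite psi_rec.
  have E1 : DD (p :: R) (fun y => (cst - y%:~R) * g y) =
            (cst - p%:~R) * DD (p :: R) g + DD R g.
    rewrite (@DD_ext _ _ (fun y => (cst - p%:~R) * g y - (y%:~R - p%:~R) * g y)); last by move=> y _; ring.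
    by rewrite DD_comb DD_rem // opprK.
  have E2 : DD (p :: R) (fun y => (cst - y%:~R) * g y) =
            (cst - q%:~R) * DD (p :: R) g + DD L g.
    rewrite (@DD_perm _ _ _ permq) (@DD_perm _ _ g permq).
    rewrite (@DD_ext _ _ (fun y => (cst - q%:~R) * g y - (y%:~R - q%:~R) * g y)); last by move=> y _; ring.
    by rewrite DD_comb DD_rem // opprK.
  rewrite E0; move: E1 E2; rewrite /cst.
  move: (DD (p :: R) _) (DD (p :: R) g) (DD L g) (DD R g) => B X PL PR e1 e2.
  have -> : PL = B - ((Posz k)%:~R + (m.+1)%:R - q%:~R) * X by rewrite e2; ring.
  have -> : PR = B - ((Posz k)%:~R + (m.+1)%:R - p%:~R) * X by rewrite e1; ring.
  ring.
have Qp : (0 : rat) < q%:~R - p%:~R by rewrite subr_gt0 ltr_int.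
have Mp : (0 : rat) < (m.+1)%:R by rewrite ltr0n.
have fromB : forall k, 0 <= (q%:~R - p%:~R) * ((m.+1)%:R * DD (p :: R) (psi m.+2 k)) ->
   0 <= DD (p :: R) (psi m.+2 k).
  by move=> k; rewrite pmulr_rge0 // pmulr_rge0.
have fromB0 : forall k, (q%:~R - p%:~R) * ((m.+1)%:R * DD (p :: R) (psi m.+2 k)) = 0 ->
   DD (p :: R) (psi m.+2 k) = 0.
  move=> k /eqP; rewrite !mulf_eq0 (gt_eqF Qp) (gt_eqF Mp) /=; by move/eqP.
have fromBp : forall k, 0 < (q%:~R - p%:~R) * ((m.+1)%:R * DD (p :: R) (psi m.+2 k)) ->
   0 < DD (p :: R) (psi m.+2 k).
  by move=> k; rewrite pmulr_rgt0 // pmulr_rgt0.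
split => k.
- apply: (fromB k); rewrite recur; apply: addr_ge0.
  + case: (ltP (Posz k) p) => h; first by rewrite IL2 // mulr0.
    apply: mulr_ge0 => //; have := le_ir _ _ h; lra.
  + case: (ltP (last 0 R - (m.+1)%:Z) (Posz k)) => h; first by rewrite IR3 // mulr0.
    apply: mulr_ge0 => //; rewrite lR in h.
    have h' := @iA _ _ _ h.
    have := le_ir _ _ h'; rewrite rmorphD /=; lra.
- move=> /= h; apply: fromB0; rewrite recur IL2 // IR2 ?mulr0 ?addr0 //.
  by rewrite hR; apply: (lt_trans h).
- move=> h; have hq : last 0 (p :: R) = q by [].
  rewrite hq in h; apply: fromB0; rewrite recur IL3 ?mulr0 ?add0r; last first.
    exact: (@iB _ _ _ _ lLq h).
  case: (ltP (last 0 R - (m.+1)%:Z) (Posz k)) => h2; first by rewrite IR3 // mulr0.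
  rewrite lR in h2.
  have e := @iC _ _ _ h h2.
  rewrite e rmorphD /=; apply/eqP; rewrite mulf_eq0; apply/orP; left; apply/eqP; ring.
- move=> /= e; apply: fromBp; rewrite recur IR2 ?mulr0 ?addr0; last by rewrite hR e.
  apply: mulr_gt0; last by apply: IL4.
  by rewrite e; lra.
Qed.

Lemma LL m a : size a = m.+1 -> sorted <%R a -> all (fun x => 0 <= x) a -> LLprop m a.
Proof.
elim: m a => [|[|m] IH] a.
- case: a => [|p [|]] //= _ _ /andP [p0 _]; exact: LL0.
- case: a => [|p [|q [|]]] //= _ /andP [pq _] /andP [p0 _]; exact: LL1.
- by move=> sz hs hnn; apply: LLS.
Qed.
Lemma psum_ext f g k : (forall j, f j = g j) -> psum f k = psum g k.
Proof. by move=> h; rewrite /psum; apply: eq_bigr => j _; rewrite h. Qed.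

Lemma iter_psum_ext r f g : (forall j, f j = g j) -> forall k, iter r psum f k = iter r psum g k.
Proof.
elim: r => [|r IH] h k /=; first by rewrite h.
by apply: psum_ext => j; apply: IH.
Qed.

Lemma DD_sum a (K : nat) (F : nat -> int -> rat) :
  \sum_(j < K) DD a (F j) = DD a (fun y => \sum_(j < K) F j y).
Proof.
rewrite /DD exchange_big /=; apply: eq_bigr => y _; by rewrite mulr_sumr.
Qed.

Lemma iter_psum_DD r a (F : nat -> int -> rat) k :
  iter r psum (fun j => DD a (F j)) k = DD a (fun y => iter r psum (fun j => F j y) k).
Proof.
elim: r k => [|r IH] k //=.
rewrite /psum; under eq_bigr => j _ do rewrite IH.
by rewrite (DD_sum a k.+1 (fun j y => iter r psum (fun j0 => F j0 y) j)).
Qed.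

Lemma psi_add r t k y : psi (r + t) k y = iter r psum (fun j => psi t j y) k.
Proof. by rewrite /psi iterD. Qed.

Lemma DD_psi_add r t a k : DD a (psi (r + t) k) = iter r psum (fun j => DD a (psi t j)) k.
Proof. by rewrite iter_psum_DD; apply: DD_ext => y _; rewrite psi_add. Qed.

Lemma iter_psum_ge0 r g : (forall j, 0 <= g j) -> forall k, 0 <= iter r psum g k.
Proof.
elim: r => [|r IH] h k //=.
by rewrite /psum; apply: sumr_ge0 => j _; apply: IH.
Qed.

Lemma iter_psum_ge r g : (forall j, 0 <= g j) -> forall k, g k <= iter r psum g k.
Proof.
elim: r => [|r IH] h k //=.
rewrite /psum big_ord_recr /=; apply: (le_trans (IH h k)).
rewrite lerDr; apply: sumr_ge0 => j _; exact: iter_psum_ge0.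
Qed.

Lemma Pos n e t : uniq e -> all (fun x => 0 <= x) e -> size e = t.+1 -> (t <= n)%N ->
  (forall k, 0 <= DD e (psi n k)) /\ (exists k, 0 < DD e (psi n k)).
Proof.
move=> ue ne se tn.
set s := sort <=%R e.
have ps : perm_eq s e by rewrite /s perm_sort.
have ps' : perm_eq e s by rewrite perm_sym.
have ss : sorted <%R s by rewrite /s sort_lt_sorted.
have szs : size s = t.+1 by rewrite (perm_size ps).
have ns : all (fun x => 0 <= x) s by rewrite (perm_all _ ps).
have [h1 _ _ h4] := LL t s szs ss ns.
have eqn : n = (n - t + t)%N by rewrite subnK.
have E : forall k, DD e (psi n k) = iter (n - t) psum (fun j => DD s (psi t j)) k.
  by move=> k; rewrite (@DD_perm e s _ ps') {1}eqn DD_psi_add.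
split => [k|]; first by rewrite E; apply: iter_psum_ge0.
have h0 : 0 <= head 0 s.
  case: s ns szs {h1 h4 E ps ps' ss} => // x s' /= /andP [] //.
case: (head 0 s) h0 h4 => // hh _ h4.
exists hh; rewrite E; apply: (lt_le_trans (h4 hh erefl)); apply: iter_psum_ge => j; exact: h1.
Qed.
Definition Dp (d : seq int) : rat := \prod_(z <- d | z != 0) z%:~R.
Definition FF n (d : seq int) k : rat := Dp d * DD d (psi n k).

Lemma Dp_perm a b : perm_eq a b -> Dp a = Dp b.
Proof. by move=> h; rewrite /Dp (perm_big b h). Qed.

Lemma FF_perm n a b k : perm_eq a b -> FF n a k = FF n b k.
Proof. by move=> h; rewrite /FF (@Dp_perm a b h) (@DD_perm a b _ h). Qed.

Lemma Dp_gt0 C : all (fun x => 0 <= x) C -> 0 < Dp C.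
Proof.
move=> h; rewrite /Dp big_seq_cond; apply: prodr_gt0 => z /andP [zC z0].
by rewrite ltr0z lt_def z0 (allP h).
Qed.

Lemma Dp0 C : Dp (0 :: C) = Dp C.
Proof. by rewrite /Dp big_cons eqxx. Qed.

Lemma DpS w C : w != 0 -> Dp (w :: C) = w%:~R * Dp C.
Proof. by move=> h; rewrite /Dp big_cons h. Qed.

Lemma stepB n C w k : 0 \notin C -> w \notin C -> w != 0 ->
  FF n (0 :: C) k - FF n [:: 0, w & C] k = Dp C * DD (w :: C) (psi n k).
Proof.
move=> h0 hw w0.
have w0' : 0 != w by rewrite eq_sym.
rewrite /FF !Dp0 DpS // DD_TP // subr0.
have : (w%:~R : rat) != 0 by rewrite intr_eq0.
move: (w%:~R : rat) (Dp C) (DD (0 :: C) _) (DD (w :: C) _) => W D X Y hW.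
field; done.
Qed.

Lemma stepA n C v w k : 0 \notin C -> v \notin C -> w \notin C -> v != 0 -> w != 0 -> v != w ->
  FF n [:: 0, w & C] k - FF n [:: 0, v & C] k = (w - v)%:~R * Dp C * DD [:: v, w & C] (psi n k).
Proof.
move=> h0 hv hw v0 w0 vw.
have w0' : 0 != w by rewrite eq_sym.
have v0' : 0 != v by rewrite eq_sym.
rewrite /FF !Dp0 !DpS // !DD_TP // !subr0.
have : (w%:~R : rat) != 0 by rewrite intr_eq0.
have : (v%:~R : rat) != 0 by rewrite intr_eq0.
have : (w%:~R - v%:~R : rat) != 0 by rewrite -rmorphB /= intr_eq0 subr_eq0 eq_sym.
rewrite rmorphB /=.
move: (w%:~R : rat) (v%:~R : rat) (Dp C) (DD (0 :: C) _) (DD (w :: C) _) (DD (v :: C) _) => W V D X Y Z h1 h2 h3.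
field; rewrite h1 h2 h3 //.
Qed.
Lemma iter_psum_scale r (c : rat) h k : iter r psum (fun j => c * h j) k = c * iter r psum h k.
Proof.
elim: r k => [|r IH] k //=.
by rewrite /psum mulr_sumr; apply: eq_bigr => j _; rewrite IH.
Qed.

Lemma sign_sq (i : nat) : ((-1) ^+ i * (-1) ^+ i : rat) = 1.
Proof. by rewrite -exprD addnn -mul2n exprM sqrrN !expr1n. Qed.

Lemma Dprod_eq d : uniq d -> head 0 d = 0 -> (0 < size d)%N ->
  \prod_(k < size d | (0 < (k : nat))%N) ((nth 0 d k)%:~R : rat) = Dp d.
Proof.
move=> ud hd sd.
have e0 : nth 0 d 0 = 0 by rewrite nth0.
rewrite /Dp (big_nth 0) big_mkord; apply: eq_bigl => i.
rewrite -{2}e0 nth_uniq //; by case: (nat_of_ord i).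
Qed.

Lemma cc_nth d (i : 'I_(size d)) : uniq d ->
  cc d (nth 0 d i) = \prod_(k < size d | (k : nat) != i) ((nth 0 d k - nth 0 d i)%:~R)^-1.
Proof.
move=> ud; rewrite /cc (big_nth 0) big_mkord; apply: eq_bigl => k.
by rewrite nth_uniq.
Qed.

Lemma hnum n d j : uniq d -> head 0 d = 0 -> (0 < size d)%N -> (size d <= n.+1)%N ->
  hilb_num n (norm_pure_diagram d) j = Dp d * DD d (fun y => ((Posz j == y)%:R : rat)).
Proof.
move=> ud hd sd sn.
rewrite /hilb_num /norm_pure_diagram Dprod_eq //.
under eq_bigr => i _ do rewrite mulrCA.
rewrite -mulr_sumr; congr (_ * _).
rewrite -(big_mkord xpredT (fun i => (-1) ^+ i * pure_diagram d i j)).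
rewrite /DD [RHS](big_nth 0) [RHS]big_mkord.
rewrite (big_cat_nat _ (n := size d)) //=.
have -> : \sum_(size d <= i < n.+1) (-1) ^+ i * pure_diagram d i j = 0.
  rewrite big_nat big1 // => i /andP [hi _].
  by rewrite /pure_diagram ltnNge hi /= mulr0.
rewrite addr0.
rewrite big_mkord; apply: eq_bigr => i _.
rewrite /pure_diagram ltn_ord /= cc_nth //.
case: eqP => _; last by rewrite mulr0 mulr0.
by rewrite mulr1 mulrA sign_sq mul1r.
Qed.

Lemma hc n d k : uniq d -> head 0 d = 0 -> (0 < size d)%N -> (size d <= n.+1)%N ->
  hilb_coef n (norm_pure_diagram d) k = FF n d k.
Proof.
move=> ud hd sd sn; rewrite /hilb_coef.
rewrite (@iter_psum_ext n _ (fun j => DD d (fun y => Dp d * ((Posz j == y)%:R : rat)))); last first.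
  by move=> j; rewrite hnum // DD_scale.
rewrite iter_psum_DD /FF -DD_scale; apply: DD_ext => y _.
by rewrite iter_psum_scale.
Qed.
Definition WW n d d' := forall k, FF n d k <= FF n d' k.
Definition SS n d d' := exists k, FF n d k < FF n d' k.

Lemma WW_refl n d : WW n d d.
Proof. by move=> k. Qed.
Lemma WW_trans n a b c : WW n a b -> WW n b c -> WW n a c.
Proof. by move=> h1 h2 k; apply: le_trans (h1 k) (h2 k). Qed.
Lemma SW_trans n a b c : SS n a b -> WW n b c -> SS n a c.
Proof. by move=> [k h1] h2; exists k; apply: lt_le_trans h1 (h2 k). Qed.
Lemma WS_trans n a b c : WW n a b -> SS n b c -> SS n a c.
Proof. by move=> h1 [k h2]; exists k; apply: le_lt_trans (h1 k) h2. Qed.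

Lemma step_WS n d d' lam e t :
  (forall k, FF n d' k - FF n d k = lam * DD e (psi n k)) -> 0 < lam ->
  uniq e -> all (fun x => 0 <= x) e -> size e = t.+1 -> (t <= n)%N ->
  WW n d d' /\ SS n d d'.
Proof.
move=> E lp ue ne se tn; have [h1 [k h2]] := Pos n e t ue ne se tn.
split.
  by move=> k'; rewrite -subr_ge0 E mulr_ge0 // ltW.
by exists k; rewrite -subr_gt0 E mulr_gt0.
Qed.

Lemma all_pos_nn (C : seq int) : all (fun x => 0 < x) C -> all (fun x => 0 <= x) C.
Proof. by move/allP=> h; apply/allP => x /h /ltW. Qed.

Lemma pw_uniq (C : seq int) : pairwise <%R C -> uniq C.
Proof. by rewrite -lt_sorted_pairwise; apply: lt_sorted_uniq. Qed.

Lemma all_lt_trans (b : seq int) x y : all (fun z => z < x) b -> x <= y -> all (fun z => z < y) b.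
Proof. by move/allP=> h xy; apply/allP => z /h zx; apply: lt_le_trans zx xy. Qed.

Lemma trunc n C : forall r, pairwise <%R (0 :: C ++ r) -> (size (C ++ r) <= n)%N ->
  WW n (0 :: C ++ r) (0 :: C) /\ (r != [::] -> SS n (0 :: C ++ r) (0 :: C)).
Proof.
elim/last_ind => [|r w IH] hp hs; first by rewrite cats0; split => //; apply: WW_refl.
have hp' := hp; rewrite -cat_cons -rcons_cat pairwise_rcons in hp'.
case/andP: hp' => allw hpr.
have hs1 : (size (C ++ r) <= n)%N.
  by apply: leq_trans hs; rewrite !size_cat size_rcons addnS.
have [IH1 _] := IH hpr hs1.
set C' := C ++ r.
have hpC : pairwise <%R (0 :: C') := hpr.
move: (hpC); rewrite pairwise_cons => /andP [posC pwC].
move: (allw); rewrite /= => /andP [w0 wC].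
have hw0 : w != 0 by rewrite gt_eqF.
have perm1 : perm_eq (0 :: C ++ rcons r w) [:: 0, w & C'].
  by rewrite perm_cons -rcons_cat perm_rcons.
have E : forall k, FF n (0 :: C') k - FF n (0 :: C ++ rcons r w) k = Dp C' * DD (w :: C') (psi n k).
  move=> k; rewrite (@FF_perm n _ _ k perm1) stepB //; first by apply: notin_lt.
  by apply: notin_gt.
have szC : size (C ++ rcons r w) = (size C').+1 by rewrite size_cat size_rcons /C' size_cat addnS.
have u1 : uniq (w :: C') by rewrite /= (@notin_gt w C' wC) pw_uniq.
have n1 : all (fun x => 0 <= x) (w :: C') by rewrite /= (ltW w0) (all_pos_nn C' posC).
have t1 : (size C' <= n)%N by move: hs; rewrite szC => /ltnW.
have [W1 S1] := @step_WS n _ _ _ (w :: C') (size C') E (Dp_gt0 C' (all_pos_nn C' posC)) u1 n1 erefl t1.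
split; first exact: WW_trans W1 IH1.
by move=> _; apply: SW_trans S1 IH1.
Qed.
Lemma pw_dec (b s : seq int) x : pairwise <%R (0 :: b ++ x :: s) ->
  [/\ all (fun z => 0 < z) b, 0 < x, all (fun z => 0 < z) s, all (fun z => z < x) b &
      all (fun z => x < z) s] /\ [/\ allrel <%R b s, pairwise <%R b & pairwise <%R s].
Proof.
rewrite pairwise_cons all_cat /= pairwise_cat pairwise_cons allrel_consr.
by case/andP => /andP [h1 /andP [h2 h3]] /and3P [/andP [h4 h5] h6 /andP [h7 h8]].
Qed.

Lemma pw_bld (b s : seq int) x : all (fun z => 0 < z) b -> 0 < x -> all (fun z => 0 < z) s ->
  all (fun z => z < x) b -> all (fun z => x < z) s -> allrel <%R b s ->
  pairwise <%R b -> pairwise <%R s -> pairwise <%R (0 :: b ++ x :: s).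
Proof.
move=> h1 h2 h3 h4 h5 h6 h7 h8.
by rewrite pairwise_cons all_cat /= pairwise_cat pairwise_cons allrel_consr h1 h2 h3 h4 h5 h6 h7 h8.
Qed.

Lemma path_eq n : forall a a' s, size a = size a' ->
  (forall i, (i < size a)%N -> nth 0 a i <= nth 0 a' i) ->
  pairwise <%R (0 :: a ++ s) -> pairwise <%R (0 :: a' ++ s) -> (size (a ++ s) <= n)%N ->
  WW n (0 :: a ++ s) (0 :: a' ++ s) /\ (a != a' -> SS n (0 :: a ++ s) (0 :: a' ++ s)).
Proof.
move=> a; elim/last_ind: a => [|b x IH] a' s.
  by case: a' => // _ _ _ _ _; split; [exact: WW_refl | by []].
case/lastP: a' => [|b' x']; first by rewrite size_rcons.
rewrite !size_rcons => -[sb] hle hp hp' hs.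
have xx : x <= x'.
  by have := hle (size b) (ltnSn _); rewrite !nth_rcons ltnn eqxx sb ltnn eqxx.
have hle' : forall i, (i < size b)%N -> nth 0 b i <= nth 0 b' i.
  by move=> i hi; have := hle i (ltnW hi); rewrite !nth_rcons hi -sb hi.
rewrite !cat_rcons in hp hp' hs *.
have [[pb px ps bx xs] [bs pwb pws]] := @pw_dec _ _ _ hp.
have [[pb' px' ps' bx' x's] [bs' pwb' pws']] := @pw_dec _ _ _ hp'.
have bx'' := @all_lt_trans _ _ _ bx xx.
have hp1 : pairwise <%R (0 :: b ++ x' :: s) := @pw_bld _ _ _ pb px' ps bx'' x's bs pwb pws.
have hs1 : (size (b ++ x' :: s) <= n)%N by move: hs; rewrite !size_cat.
have [W2 S2] := IH b' (x' :: s) sb hle' hp1 hp' hs1.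
rewrite eqseq_rcons.
have xx2 := xx; rewrite le_eqVlt in xx2; case/orP: xx2 => [/eqP exx | lxx].
  rewrite -exx in W2 S2 *; split => //; rewrite eqxx andbT; exact: S2.
set C := b ++ s.
have perm0 : perm_eq (0 :: b ++ x :: s) [:: 0, x & C].
  by rewrite perm_cons -cat1s perm_catCA.
have perm1 : perm_eq (0 :: b ++ x' :: s) [:: 0, x' & C].
  by rewrite perm_cons -cat1s perm_catCA.
have pC : all (fun z => 0 < z) C by rewrite all_cat pb ps.
have n0C : 0 \notin C by apply: notin_lt.
have nxC : x \notin C by rewrite mem_cat negb_or (@notin_gt x b bx) (@notin_lt x s xs).
have nx'C : x' \notin C by rewrite mem_cat negb_or (@notin_gt x' b bx'') (@notin_lt x' s x's).
have x0 : x != 0 by rewrite gt_eqF.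
have x'0 : x' != 0 by rewrite gt_eqF.
have xne : x != x' by rewrite lt_eqF.
have E : forall k, FF n (0 :: b ++ x' :: s) k - FF n (0 :: b ++ x :: s) k =
    ((x' - x)%:~R * Dp C) * DD [:: x, x' & C] (psi n k).
  by move=> k; rewrite (@FF_perm n _ _ k perm1) (@FF_perm n _ _ k perm0) stepA.
have lp : 0 < (x' - x)%:~R * Dp C.
  by rewrite mulr_gt0 ?Dp_gt0 ?all_pos_nn // ltr0z subr_gt0.
have ue : uniq [:: x, x' & C].
  by rewrite /= inE negb_or xne nxC nx'C pw_uniq // pairwise_cat bs pwb pws.
have ne : all (fun z => 0 <= z) [:: x, x' & C] by rewrite /= (ltW px) (ltW px') all_pos_nn.
have tn : ((size C).+1 <= n)%N by move: hs; rewrite /C !size_cat addnS.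
have [W1 S1] := @step_WS n _ _ _ _ (size C).+1 E lp ue ne erefl tn.
split; first exact: WW_trans W1 W2.
by move=> _; apply: SW_trans S1 W2.
Qed.
Theorem proposition4p4 (n : nat) (d d' : seq int) :
  (1 <= n)%N ->
  valid_degrees n d -> valid_degrees n d' ->
  head 0 d = 0 -> head 0 d' = 0 ->
  pd_lt d d' ->
  (forall k : nat,
     0 <= hilb_coef n (norm_pure_diagram d') k - hilb_coef n (norm_pure_diagram d) k)
  /\ (exists k : nat,
     hilb_coef n (norm_pure_diagram d') k - hilb_coef n (norm_pure_diagram d) k != 0).
Proof.
move=> _ /and3P [sd sdn srt] /and3P [sd' sdn' srt'] hd hd' /andP [/andP [sz hle] dd].
have ud := lt_sorted_uniq srt; have ud' := lt_sorted_uniq srt'.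
case: d sd sdn srt hd hle dd ud sz => // z D _ sdn srt /= hz; subst z.
case: d' sd' sdn' srt' hd' ud' => // z D' _ sdn' srt' /= hz; subst z.
move=> ud' hle dd ud sz.
rewrite ltnS in sz.
have hp : pairwise <%R (0 :: D) by rewrite -lt_sorted_pairwise.
have hp' : pairwise <%R (0 :: D') by rewrite -lt_sorted_pairwise.
set D1 := take (size D') D; set r := drop (size D') D.
have eD : D = D1 ++ r by rewrite cat_take_drop.
have sD1 : size D1 = size D' by rewrite size_take; case: ltngtP sz => // h _; apply/eqP; rewrite eqn_leq h.
have hp1 : pairwise <%R (0 :: D1 ++ r) by rewrite -eD.
have hs1 : (size (D1 ++ r) <= n)%N by rewrite -eD.
have [Wt St] := @trunc n D1 r hp1 hs1.
have hp2 : pairwise <%R (0 :: D1 ++ [::]).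
  by move: hp1; rewrite cats0 -cat_cons pairwise_cat => /and3P [].
have hp2' : pairwise <%R (0 :: D' ++ [::]) by rewrite cats0.
have hs2 : (size (D1 ++ [::]) <= n)%N by rewrite cats0 sD1.
have hle2 : forall i, (i < size D1)%N -> nth 0 D1 i <= nth 0 D' i.
  move=> i hi; rewrite /D1 nth_take -?sD1 //.
  have hi' : (i.+1 < (size D').+1)%N by rewrite ltnS -sD1.
  exact: (forallP hle (Ordinal hi')).
have [Wp Sp] := @path_eq n D1 D' [::] sD1 hle2 hp2 hp2' hs2.
rewrite !cats0 in Wp Sp.
rewrite -eD in Wt St.
have WW0 : WW n (0 :: D) (0 :: D') := @WW_trans n _ _ _ Wt Wp.
split; first by move=> k; rewrite !hc // subr_ge0; apply: WW0.
have [k hk] : SS n (0 :: D) (0 :: D').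
  case: (eqVneq r [::]) => hr.
    have eD1 : D = D1 by rewrite eD hr cats0.
    rewrite eD1; apply: Sp; apply: contraNneq dd => e.
    by rewrite eD hr cats0 e.
  exact: (@SW_trans n _ _ _ (St hr) Wp).
by exists k; rewrite !hc // subr_eq0 gt_eqF.
Qed.
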